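(* Let $M,S,a$ be integers with $M+S\ge0$. Then the sum on the left below has only finitely many nonzero terms, and $$\sum_{k\in\mathbb{Z}}q^{k^2+ak}\left[{M\atop a+k}\right]_q^+\left[{S\atop k}\right]_q^+=\left[{M+S\atop S+a}\right]_q .$$
   Context: Let $(q)_n=\prod_{i=1}^n(1-q^i)$. Define $\left[{n\atop m}\right]_q=\frac{(q)_n}{(q)_{n-m}(q)_m}$ if $n\ge m\ge0$ and $0$ otherwise. For all integers $n,m$ set $\left[{n\atop m}\right]_q^+=\left[{n\atop m}\right]_q$ if $n\ge0$, and $\left[{n\atop m}\right]_q^+=(-1)^{n-m}q^{-((n-m)^2+(n-m))/2}\left[{-m-1\atop -n-1}\right]_{q^{-1}}$ if $n<0$. *)

(* Defs.v *)
From HB Require Import structures.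
From mathcomp Require Import all_boot all_order all_algebra.
Set Implicit Arguments. Unset Strict Implicit. Unset Printing Implicit Defensive.
Import Order.TTheory GRing.Theory Num.Theory.
Local Open Scope ring_scope.

Definition qpoch (F : fieldType) (q : F) (n : nat) : F :=
  \prod_(1 <= i < n.+1) (1 - q ^+ i).

Definition qbin (F : fieldType) (q : F) (n m : int) : F :=
  if (0 <= m) && (m <= n) then
    qpoch q `|n|%N / (qpoch q `|n - m|%N * qpoch q `|m|%N)
  else 0.

Definition qbinp (F : fieldType) (q : F) (n m : int) : F :=
  if 0 <= n then qbin q n m
  else (-1) ^ (n - m) * q ^ (- (((n - m) ^+ 2 + (n - m)) %/ 2)%Z)
       * qbin q^-1 (- m - 1) (- n - 1).

Definition qvar : {fraction {poly int}} := tofrac 'X.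

(* Main.v *)
Require Import Defs.
From mathcomp Require Import all_boot all_order all_algebra.
From mathcomp Require Import zify ring.
Import Order.TTheory GRing.Theory Num.Theory.
Local Open Scope ring_scope.
Set Implicit Arguments. Unset Strict Implicit.

Lemma qpoch0 (F : fieldType) (q : F) : qpoch q 0 = 1.
Proof. by rewrite /qpoch big_geq. Qed.

Lemma qpochS (F : fieldType) (q : F) n : qpoch q n.+1 = qpoch q n * (1 - q ^+ n.+1).
Proof. by rewrite /qpoch big_nat_recr. Qed.

Definition goodq (F : fieldType) (q : F) := q != 0 /\ forall i : nat, (0 < i)%N -> q ^+ i != 1.

Lemma qpoch_neq0 (F : fieldType) (q : F) n : goodq q -> qpoch q n != 0.
Proof.
move=> [_ Hq]; elim: n => [|n IH]; first by rewrite qpoch0 oner_neq0.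
by rewrite qpochS mulf_neq0 // subr_eq0 eq_sym Hq.
Qed.

Lemma goodqV (F : fieldType) (q : F) : goodq q -> goodq q^-1.
Proof.
move=> [q0 Hq]; split; first by rewrite invr_eq0.
move=> i /Hq; apply: contra; rewrite exprVn => /eqP H.
by rewrite -[q ^+ i]invrK H invr1.
Qed.

Lemma qbin_nat (F : fieldType) (q : F) (n m : nat) : (m <= n)%N ->
  qbin q n m = qpoch q n / (qpoch q (n - m) * qpoch q m).
Proof.
move=> mn; rewrite /qbin lez_nat mn /= subzn //.
Qed.

Lemma qbin_out (F : fieldType) (q : F) (n m : int) : ~~ ((0 <= m) && (m <= n)) ->
  qbin q n m = 0.
Proof. by move=> H; rewrite /qbin (negbTE H). Qed.

Lemma qbin_n0 (F : fieldType) (q : F) (n : nat) : goodq q -> qbin q n 0 = 1.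
Proof.
move=> g; rewrite (qbin_nat q (m:=0)) // subn0 qpoch0 mulr1 divff //.
exact: qpoch_neq0.
Qed.

Lemma qbin_nn (F : fieldType) (q : F) (n : nat) : goodq q -> qbin q n n = 1.
Proof.
move=> g; rewrite qbin_nat // subnn qpoch0 mul1r divff //.
exact: qpoch_neq0.
Qed.

Lemma qbin_key (F : fieldType) (q : F) (r j : nat) : goodq q ->
  qbin q (r + j).+2 j.+1 = qbin q (r + j).+1 j + q ^+ j.+1 * qbin q (r + j).+1 j.+1.
Proof.
move=> g; have [q0 Hq] := g.
rewrite !qbin_nat; try lia.
have -> : ((r + j).+2 - j.+1 = r.+1)%N by lia.
have -> : ((r + j).+1 - j = r.+1)%N by lia.
have -> : ((r + j).+1 - j.+1 = r)%N by lia.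
rewrite !qpochS.
have -> : q ^+ (r + j).+2 = q ^+ r.+1 * q ^+ j.+1 by rewrite -exprD; congr (_ ^+ _); lia.
have h1 := qpoch_neq0 r g. have h2 := qpoch_neq0 j g. have h3 := qpoch_neq0 (r+j) g.
have h4 : 1 - q ^+ r.+1 != 0 by rewrite subr_eq0 eq_sym Hq.
have h5 : 1 - q ^+ j.+1 != 0 by rewrite subr_eq0 eq_sym Hq.
have h6 : 1 - q ^+ (r+j).+1 != 0 by rewrite subr_eq0 eq_sym Hq.
have -> : q ^+ (r + j).+1 = q ^+ r.+1 * q ^+ j.+1 / q by
  rewrite -exprD -[X in _ = _ / X]expr1 -expfB; [congr (_ ^+ _); lia | lia].
by field; rewrite h1 h2 h4 h5 q0.
Qed.

Lemma qbin_pascal1 (F : fieldType) (q : F) (n : nat) (m : int) : goodq q ->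
  qbin q n.+1 m = qbin q n (m - 1) + q ^ m * qbin q n m.
Proof.
move=> g.
have [m0|m0] := ltP m 0.
  rewrite !qbin_out ?mulr0 ?addr0 //; apply/negP => /andP [h _]; lia.
have [k ->] : exists k : nat, m = k by exists `|m|%N; lia.
case: k m0 => [|k] _.
  rewrite qbin_n0 // (qbin_out _ (n:=n)) ?qbin_n0 ?expr0z ?mul1r ?add0r //.
have [kn|kn] := leqP k.+1 n.
  have [r ->] : exists r, n = (r + k).+1 by exists (n - k.+1)%N; lia.
  rewrite qbin_key // -exprnP.
  by have -> : (k.+1%:Z - 1 = k%:Z) by lia.
have [kn'|kn'] := eqVneq k n.
  subst k; rewrite !qbin_nn // (@qbin_out _ _ n n.+1) ?mulr0 ?addr0.
    have -> : ((n.+1)%:Z - 1 = n) by lia.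
    by rewrite qbin_nn.
  apply/negP => /andP [_ h]; lia.
rewrite !qbin_out ?mulr0 ?addr0 //; apply/negP => /andP [_ h]; lia.
Qed.

Lemma qbin_sym (F : fieldType) (q : F) (n : nat) (m : int) :
  qbin q n m = qbin q n (n%:Z - m).
Proof.
rewrite /qbin.
have -> : (0 <= n%:Z - m) && (n%:Z - m <= n) = (0 <= m) && (m <= n) by
  apply/idP/idP => /andP [h1 h2]; apply/andP; split; lia.
case: ifP => // _.
have -> : absz (n%:Z - (n%:Z - m))%R = absz m by congr absz; lia.
by rewrite [X in _ / X]mulrC.
Qed.

Lemma qbin_pascal2 (F : fieldType) (q : F) (n : nat) (m : int) : goodq q ->
  qbin q n.+1 m = q ^ (n.+1%:Z - m) * qbin q n (m - 1) + qbin q n m.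
Proof.
move=> g; rewrite qbin_sym qbin_pascal1 // addrC.
rewrite [qbin q n (m - 1)]qbin_sym [qbin q n m]qbin_sym.
congr (_ * qbin _ _ _ + qbin _ _ _); lia.
Qed.

Definition ee (x : int) : int := ((x ^+ 2 + x) %/ 2)%Z.

Lemma ee_step d : ee d = ee (d - 1) + d.
Proof.
rewrite /ee.
have -> : d ^+ 2 + d = d * 2 + ((d - 1) ^+ 2 + (d - 1)) by ring.
by rewrite divzMDl // addrC.
Qed.

Lemma ee0 : ee 0 = 0. Proof. by []. Qed.

Lemma qbin_z0 (F : fieldType) (q : F) (N : int) : goodq q ->
  qbin q N 0 = if 0 <= N then 1 else 0.
Proof.
move=> g; case: ifP => h.
  have [k ->] : exists k : nat, N = k by exists `|N|%N; lia.
  exact: qbin_n0.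
by rewrite qbin_out //; apply/negP => /andP [_ h']; rewrite h' in h.
Qed.

Lemma qbinp_pos (F : fieldType) (q : F) (n m : int) : 0 <= n -> qbinp q n m = qbin q n m.
Proof. by move=> h; rewrite /qbinp h. Qed.

Lemma qbinp_neg (F : fieldType) (q : F) (n m : int) : n < 0 -> qbinp q n m =
  (-1) ^ (n - m) * q ^ (- ee (n - m)) * qbin q^-1 (- m - 1) (- n - 1).
Proof. by move=> h; rewrite /qbinp ifF //; apply/negbTE; rewrite -ltNge. Qed.

Lemma expz_pred (F : fieldType) (x : F) d : x != 0 -> x ^ d = x ^ (d - 1) * x.
Proof. by move=> hx; have := expfzDr (d - 1) 1 hx; rewrite subrK expr1z. Qed.

Lemma qbinp_pascal (F : fieldType) (q : F) (n m : int) : goodq q ->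
  qbinp q n m = qbinp q (n - 1) (m - 1) + q ^ m * qbinp q (n - 1) m.
Proof.
move=> g; have [q0 _] := g.
have [n1|n1] := leP 1 n.
  have [k ->] : exists k : nat, n = k.+1 by exists (`|n|%N).-1; lia.
  rewrite !qbinp_pos; try lia.
  have -> : (k.+1%:Z - 1 = k) by lia.
  exact: qbin_pascal1.
rewrite (@qbinp_neg _ q (n - 1) (m - 1)) ?(@qbinp_neg _ q (n - 1) m); try lia.
have -> : n - 1 - (m - 1) = n - m by ring.
have -> : - (m - 1) - 1 = - m by ring.
have -> : - (n - 1) - 1 = - n by ring.
set d := n - m.
have -> : n - 1 - m = d - 1 by rewrite /d; ring.
have s1 : (-1 : F) ^ d = - (-1) ^ (d - 1).
  by rewrite (expz_pred _ (_ : (-1 : F) != 0)) ?mulrN1 // oppr_eq0 oner_eq0.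
have s2 : q ^ m * q ^ (- ee (d - 1)) = q ^ (- ee d) * q ^ n.
  rewrite -!expfzDr //; congr (_ ^ _); rewrite [ee d]ee_step /d.
  set E := ee _; lia.
have -> : q ^ m * ((-1) ^ (d - 1) * q ^ (- ee (d - 1)) * qbin q^-1 (- m - 1) (- n))
  = - ((-1) ^ d * q ^ (- ee d) * (q^-1 ^ (- n) * qbin q^-1 (- m - 1) (- n))).
  rewrite s1 exprz_inv opprK; set C := qbin _ _ _.
  transitivity ((-1) ^ (d - 1) * (q ^ m * q ^ (- ee (d - 1))) * C); first ring.
  rewrite s2; ring.
rewrite -mulrN -mulrDr.
have gV := goodqV g.
have [nneg|n0] := ltP n 0.
  rewrite qbinp_neg // -/d; congr (_ * _).
  have [m1|m1] := leP 1 (- m).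
    have [k ek] : exists k : nat, - m = k.+1 by exists (`|m|%N).-1; lia.
    have -> : - m - 1 = k by lia.
    by rewrite ek qbin_pascal1 // addrK.
  rewrite !qbin_out ?mulr0 ?subr0 ?mulr0 //; by apply/negP => /andP [h1 h2]; lia.
rewrite /d; have -> : n = 0 by lia.
rewrite qbinp_pos // oppr0 expr0z mul1r.
have [mp|mp] := ltP 0 m.
  rewrite !qbin_out ?mulr0 ?subr0 ?mulr0 //; by apply/negP => /andP [h1 h2]; lia.
rewrite !qbin_z0 //.
have [->|mn] := eqVneq m 0.
  rewrite qbin_z0 // subr0 ee0 oppr0 expr0z !mul1r /=; by rewrite subr0.
rewrite qbin_out; last by apply/negP => /andP [h1 h2]; lia.
rewrite !ifT; try lia. by rewrite subrr mulr0.
Qed.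


Definition zsum (F : fieldType) (f : int -> F) (l : int) (n : nat) : F :=
  \sum_(i < n) f (l + i%:Z).

Lemma zsum_shift (F : fieldType) (f : int -> F) c l n :
  zsum (fun k => f (k + c)) l n = zsum f (l + c) n.
Proof. by apply: eq_bigr => i _; rewrite addrAC. Qed.

Lemma zsum_add (F : fieldType) (f g : int -> F) l n :
  zsum (fun k => f k + g k) l n = zsum f l n + zsum g l n.
Proof. by rewrite /zsum big_split. Qed.

Lemma zsum_scale (F : fieldType) (f : int -> F) c l n :
  zsum (fun k => c * f k) l n = c * zsum f l n.
Proof. by rewrite /zsum mulr_sumr. Qed.

Lemma zsum_widen (F : fieldType) (f : int -> F) l n L K :
  (forall k, f k != 0 -> (l <= k) && (k < l + n%:Z)) -> L <= l -> l + n%:Z <= L + K%:Z ->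
  zsum f l n = zsum f L K.
Proof.
move=> hs hL hK.
have Z : forall k, ~~ ((l <= k) && (k < l + n%:Z)) -> f k = 0.
  by move=> k; apply: contraNeq; apply: hs.
set d := `|l - L|%N.
have hd : L + d%:Z = l by rewrite /d; lia.
set e := (K - d - n)%N.
have eK : K = (d + (n + e))%N by rewrite /e; lia.
rewrite /zsum eK; symmetry; rewrite big_split_ord /= big1 ?add0r; last first.
  by move=> i _; apply: Z; rewrite /=; have := ltn_ord i; lia.
rewrite big_split_ord /= [X in _ + X]big1 ?addr0; last first.
  by move=> i _; apply: Z; rewrite /=; have := ltn_ord i; lia.
by apply: eq_bigr => i _; congr f; rewrite -hd; lia.
Qed.

Lemma zsum_ext (F : fieldType) (f : int -> F) l n l' n' :
  (forall k, f k != 0 -> (l <= k) && (k < l + n%:Z)) ->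
  (forall k, f k != 0 -> (l' <= k) && (k < l' + n'%:Z)) ->
  zsum f l n = zsum f l' n'.
Proof.
move=> h1 h2.
set L := Num.min l l'.
set K := absz (Num.max (l + n%:Z) (l' + n'%:Z) - L)%R.
have hL1 : L <= l by rewrite /L ge_min lexx.
have hL2 : L <= l' by rewrite /L ge_min lexx orbT.
have hM1 : l + n%:Z <= Num.max (l + n%:Z) (l' + n'%:Z) by rewrite le_max lexx.
have hM2 : l' + n'%:Z <= Num.max (l + n%:Z) (l' + n'%:Z) by rewrite le_max lexx orbT.
rewrite (zsum_widen h1 (L := L) (K := K)) ?(zsum_widen h2 (L := L) (K := K)) //; rewrite /K; lia.
Qed.

Definition T (F : fieldType) (q : F) (M S a : int) (k : int) : F :=
  q ^ (k ^+ 2 + a * k) * qbinp q M (a + k) * qbinp q S k.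

Lemma T_supp (F : fieldType) (q : F) M (s : nat) a k :
  T q M s a k != 0 -> (0 <= k) && (k < 0 + s.+1%:Z).
Proof.
apply: contraR => h; apply/eqP; rewrite /T (@qbinp_pos _ q s k) // (@qbin_out _ q s k) ?mulr0 //
apply/negP => /andP [h1 h2]; move/negP: h; apply; apply/andP; split; lia.
Qed.

Lemma T_sym (F : fieldType) (q : F) M S a k :
  T q M S a k = T q S M (- a) (k + a).
Proof.
rewrite /T.
have -> : (k + a) ^+ 2 + - a * (k + a) = k ^+ 2 + a * k by ring.
have -> : - a + (k + a) = k by ring.
by rewrite (addrC k a) mulrAC.
Qed.

Lemma main_nat (F : fieldType) (q : F) (s : nat) : goodq q -> forall M a,
  zsum (T q M s a) 0 s.+1 = qbinp q (M + s%:Z) (s%:Z + a).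
Proof.
move=> g; have [q0 _] := g.
elim: s => [|s IH] M a.
  rewrite /zsum big_ord1 /T /=; have -> : (0 + (0%N)%:Z : int) = 0 by [].
  have -> : ((0%N)%:Z + a : int) = a by rewrite add0r.
  rewrite addr0 (_ : (0:int) ^+ 2 + a * 0 = 0); last by ring.
  rewrite expr0z mul1r (@qbinp_pos _ q 0 0) // (@qbin_n0 _ q 0%N) // mulr1.
  by have -> : M + (0%N)%:Z = M by rewrite addr0.
have pt : forall k, T q M s.+1 a k = q ^ (s.+1%:Z + a) * T q M s (a + 1) (k - 1) + T q M s a k.
  move=> k; rewrite /T (@qbinp_pos _ q s.+1 k) // (@qbinp_pos _ q s (k - 1)) // (@qbinp_pos _ q s k) // qbin_pascal2 //.
  have -> : a + 1 + (k - 1) = a + k by ring.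
  have E : q ^ (k ^+ 2 + a * k) * q ^ (s.+1%:Z - k) =
    q ^ (s.+1%:Z + a) * q ^ ((k - 1) ^+ 2 + (a + 1) * (k - 1)).
    by rewrite -!expfzDr //; congr (_ ^ _); ring.
  rewrite mulrDr; congr (_ + _).
  set X := qbinp _ _ _; set Y := qbin _ _ _.
  transitivity (q ^ (k ^+ 2 + a * k) * q ^ (s.+1%:Z - k) * X * Y); first ring.
  rewrite E; ring.
have -> : zsum (T q M s.+1 a) 0 s.+2 = zsum (fun k =>
   q ^ (s.+1%:Z + a) * T q M s (a + 1) (k - 1) + T q M s a k) 0 s.+2.
  by apply: eq_bigr => i _; exact: pt.
rewrite zsum_add (zsum_scale (fun k => T q M s (a + 1) (k - 1))).
rewrite (zsum_shift (T q M s (a + 1)) (-1)).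
rewrite (@zsum_ext _ (T q M s (a + 1)) (0 + -1) s.+2 0 s.+1); first last.
- by move=> k /T_supp.
- by move=> k /T_supp; lia.
rewrite (@zsum_ext _ (T q M s a) 0 s.+2 0 s.+1); first last.
- by move=> k /T_supp.
- by move=> k /T_supp; lia.
rewrite !IH.
rewrite (@qbinp_pascal _ q (M + s.+1%:Z) (s.+1%:Z + a)) //.
have -> : M + s.+1%:Z - 1 = M + s%:Z by lia.
have -> : s.+1%:Z + a - 1 = s%:Z + a by lia.
have -> : s%:Z + (a + 1) = s.+1%:Z + a by lia.
by rewrite addrC.
Qed.

Lemma goodq_qvar : goodq qvar.
Proof.
split.
  by rewrite /qvar -(rmorph0 (@tofrac _)) tofrac_eq polyX_eq0.
move=> i hi; rewrite /qvar -tofracXn -(rmorph1 (@tofrac _)) tofrac_eq.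
apply/eqP => /(congr1 (fun p : {poly int} => size p)); rewrite size_polyXn size_poly1.
by case: i hi.
Qed.

Unset Implicit Arguments.
Set Strict Implicit.

Theorem mainTheorem6 (M S a : int) : 0 <= M + S ->
  let term := fun k : int =>
    qvar ^ (k ^+ 2 + a * k) * qbinp qvar M (a + k) * qbinp qvar S k in
  exists N : nat,
    (forall k : int, (N < `|k|)%N -> term k = 0) /\
    \sum_(i < (N + N).+1) term (i%:Z - N%:Z) = qbinp qvar (M + S) (S + a).
Proof.
move=> hMS term.
have g := goodq_qvar.
have eT : term = T qvar M S a by [].
set N := (`|M| + `|S| + `|a|)%N.
have supp : forall k, term k != 0 -> (- N%:Z <= k) && (k < - N%:Z + (N + N).+1%:Z).
  move=> k; rewrite eT.
  have [S0|S0] := leP 0 S.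
    have [s es] : exists s : nat, S = s by exists `|S|%N; lia.
    rewrite es => /T_supp; rewrite /N; lia.
  have [m em] : exists m : nat, M = m by exists `|M|%N; lia.
  rewrite T_sym em => /T_supp; rewrite /N; lia.
exists N; split.
  move=> k hk; apply/eqP; apply: contraT => /supp; lia.
have -> : \sum_(i < (N + N).+1) term (i%:Z - N%:Z) = zsum term (- N%:Z) (N + N).+1.
  by apply: eq_bigr => i _; rewrite addrC.
have [S0|S0] := leP 0 S.
  have [s es] : exists s : nat, S = s by exists `|S|%N; lia.
  rewrite (@zsum_ext _ term _ _ 0 s.+1) //; last by rewrite eT es; exact: T_supp.
  by rewrite eT es main_nat.
have [m em] : exists m : nat, M = m by exists `|M|%N; lia.
have -> : zsum term (- N%:Z) (N + N).+1 = zsum (T qvar S m (- a)) (- N%:Z + a) (N + N).+1.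
  rewrite -zsum_shift; apply: eq_bigr => i _; by rewrite eT T_sym em.
rewrite (@zsum_ext _ (T qvar S m (- a)) _ _ 0 m.+1); first last.
- exact: T_supp.
- move=> k hk; have : term (k - a) != 0.
    by rewrite eT T_sym em subrK.
  move=> /supp; lia.
rewrite main_nat // em !qbinp_pos; try lia.
have [t et] : exists t : nat, m%:Z + S = t by exists (absz (m%:Z + S)%R); lia.
rewrite addrC et qbin_sym; congr qbin; lia.
Qed.
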